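(* Let $X_N\subseteq\mathbb{R}^n\times\mathcal{N}$ be the feasibility domain of the terminal-set EMPC problem $\mathbb{P}_T$ below, and suppose there exist a control law $\kappa_f:\mathbb{R}^n\times\mathcal{N}\to\mathbb{R}^m$ and a family of sets $X^f=\{X^f_i\}_{i\in\mathcal{N}}$ that is uniformly positive invariant for the constrained system in closed loop with $\kappa_f$. Then $X_N$ is uniformly positive invariant for the MPC-controlled system $x_{k+1}=f(x_k,\hat\kappa_N(x_k,\theta_k),\theta_k)$, i.e., if $(x_k,\theta_k)\in X_N$ then $(x_{k+1},\theta_{k+1})\in X_N$ for every $\theta_{k+1}\in\mathcal{C}(\theta_k)$.
   Context: Setting: $\mathcal{N}=\{1,\dots,\nu\}$; $\{\theta_k\}$ a time-homogeneous, irreducible, aperiodic Markov chain on $\mathcal{N}$ with transition matrix $P=(p_{ij})$ on a filtered probability space $(\Omega,\mathfrak{F},\{\mathfrak{F}_k\},\mathbb{P})$, $\mathfrak{F}_k$ generated by the history up to time $k$; system $x_{k+1}=f(x_k,u_k,\theta_k)$, $x_k\in\mathbb{R}^n$, $u_k\in\mathbb{R}^m$, with $x_k,\theta_k$ measured at time $k$; constraints $(x_k,u_k)\in Y_{\theta_k}$ ($Y_\theta$ nonempty compact); stage cost $\ell$ with each $\ell(\cdot,\cdot,\theta)$ nonnegative, lower semicontinuous, level-bounded in $u$ locally uniformly in $x$; $f(\cdot,\cdot,\theta)$ continuous. $u\lhd\mathfrak{F}_k$ means $\mathfrak{F}_k$-measurable. Cover $\mathcal{C}(i)=\{j:p_{ij}>0\}$.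 Uniform positive invariance: a family of nonempty sets $C=\{C_i\}_{i\in\mathcal{N}}$ is UPI for a constrained closed-loop Markovian switching system if $x_k\in C_{\theta_k}$ implies $x_{k+1}\in C_{\theta_{k+1}}$ (for every possible successor mode), with the state-input constraints satisfied. Terminal-set problem $\mathbb{P}_T(x,\theta)$, with a terminal penalty $V_f:\mathbb{R}^n\times\mathcal{N}\to\mathbb{R}$: $V_N^\star(x,\theta)=\inf_{\mathbf{u}_N}\mathbb{E}[V_f(x_N,\theta_N)+\sum_{j=0}^{N-1}\ell(x_j,u_j,\theta_j)\mid\mathfrak{F}_0]$ subject to, for $k=0,\dots,N-1$: $x_{k+1}=f(x_k,u_k,\theta_k)$, $(x_k,u_k)\in Y_{\theta_k}$, $(x_0,\theta_0)=(x,\theta)$, $x_N\in X^f_{\theta_N}$, $u_k\lhd\mathfrak{F}_k$. $\hat\kappa_N(x,\theta)$ is the first element of an optimal policy. *)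

(* Defs.v *)
From HB Require Import structures.
From mathcomp Require Import all_boot all_order all_algebra.
From mathcomp Require Import all_classical all_reals all_analysis.
Set Implicit Arguments. Unset Strict Implicit. Unset Printing Implicit Defensive.
Import Order.TTheory GRing.Theory Num.Theory.
Import numFieldNormedType.Exports.
Local Open Scope classical_set_scope.
Local Open Scope ring_scope.

Section MPC.
Variables (R : realType) (n m nu : nat).

(* modes N = {1..nu} are represented by 'I_nu *)
Notation mode := 'I_nu.
Notation state := 'rV[R]_n.
Notation input := 'rV[R]_m.

Definition stochastic (P : 'M[R]_nu) :=
  (forall i j, 0 <= P i j) /\ (forall i, \sum_j P i j = 1).

Definition irreducible (P : 'M[R]_nu) :=
  forall i j : mode, exists k : nat, (0 < k)%N /\ 0 < (P ^+ k) i j.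

Definition aperiodic (P : 'M[R]_nu) :=
  forall i : mode, forall d : nat,
    (forall k : nat, (0 < k)%N -> 0 < (P ^+ k) i i -> (d %| k)%N) -> d = 1%N.

Definition level_bounded_u_loc_unif (l : state -> input -> R) :=
  forall (xb : state) (alpha : R),
    exists2 V, nbhs xb V &
      exists M : R, forall x u, V x -> l x u <= alpha -> `|u| <= M.

Definition standing_assumptions (P : 'M[R]_nu)
    (f : state -> input -> mode -> state)
    (Y : mode -> set (state * input))
    (l : state -> input -> mode -> R) :=
  [/\ stochastic P /\ irreducible P /\ aperiodic P,
      (forall th, Y th !=set0 /\ compact (Y th)),
      (forall th, continuous (fun z : state * input => f z.1 z.2 th))
    & (forall th, [/\ (forall x u, 0 <= l x u th),
        lower_semicontinuous (fun z : state * input => (l z.1 z.2 th)%:E)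
      & level_bounded_u_loc_unif (fun x u => l x u th)])].

Definition UPI (P : 'M[R]_nu) (f : state -> input -> mode -> state)
    (Y : mode -> set (state * input)) (kappa : state -> mode -> input)
    (C : mode -> set state) :=
  (forall i, C i !=set0) /\
  forall (i : mode) (x : state), C i x ->
    Y i (x, kappa x i) /\ forall j : mode, 0 < P i j -> C j (f x (kappa x i) i).

(* u_k is F_k-measurable: it is a function of the mode history
   [:: theta_0; ...; theta_k] (x_0 is fixed, the states are determined). *)
Definition policy := nat -> seq mode -> input.

Definition mode_at (th0 : mode) (t : seq mode) (k : nat) : mode :=
  nth th0 (th0 :: t) k.

Definition input_at (pol : policy) (th0 : mode) (t : seq mode) (k : nat) : input :=
  pol k (take k.+1 (th0 :: t)).

Fixpoint state_at (f : state -> input -> mode -> state) (pol : policy)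
    (x0 : state) (th0 : mode) (t : seq mode) (k : nat) : state :=
  match k with
  | 0 => x0
  | k'.+1 => f (state_at f pol x0 th0 t k') (input_at pol th0 t k')
               (mode_at th0 t k')
  end.

Definition admissible (P : 'M[R]_nu) (th0 : mode) (t : seq mode) :=
  path (fun i j : mode => 0 < P i j) th0 t.

(* constraints of P_T(x,th) hold almost surely (on every positive-probability
   scenario of length N) *)
Definition feasible_policy (P : 'M[R]_nu) (f : state -> input -> mode -> state)
    (Y : mode -> set (state * input)) (Xf : mode -> set state) (N : nat)
    (x : state) (th : mode) (pol : policy) :=
  forall t : N.-tuple mode, admissible P th t ->
    (forall k : nat, (k < N)%N ->
       Y (mode_at th t k) (state_at f pol x th t k, input_at pol th t k)) /\
    Xf (last th t) (state_at f pol x th t N).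

Definition expected_cost (P : 'M[R]_nu) (f : state -> input -> mode -> state)
    (l : state -> input -> mode -> R) (Vf : state -> mode -> R) (N : nat)
    (x : state) (th : mode) (pol : policy) : R :=
  \sum_(t : N.-tuple mode)
     (\prod_(k < N) P (mode_at th t k) (mode_at th t k.+1)) *
     (Vf (state_at f pol x th t N) (last th t) +
      \sum_(k < N) l (state_at f pol x th t k) (input_at pol th t k)
                     (mode_at th t k)).

Definition feasibility_domain P f Y Xf N : set (state * mode) :=
  [set z | exists pol, feasible_policy P f Y Xf N z.1 z.2 pol].

Definition optimal_policy P f Y Xf l Vf N x th (pol : policy) :=
  feasible_policy P f Y Xf N x th pol /\
  forall pol', feasible_policy P f Y Xf N x th pol' ->
    expected_cost P f l Vf N x th pol <= expected_cost P f l Vf N x th pol'.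

End MPC.

(* Main.v *)
Require Import Defs.
From HB Require Import structures.
From mathcomp Require Import all_boot all_order all_algebra.
From mathcomp Require Import all_classical all_reals all_analysis.
Import Order.TTheory GRing.Theory Num.Theory.
Import numFieldNormedType.Exports.
Local Open Scope classical_set_scope.
Local Open Scope ring_scope.
From mathcomp Require Import zify.
From Stdlib Require Import Lia.

Section Shift.
Variables (R : realType) (n m nu : nat).
Variables (f : 'rV[R]_n -> 'rV[R]_m -> 'I_nu -> 'rV[R]_n)
  (kappa_f : 'rV[R]_n -> 'I_nu -> 'rV[R]_m) (pol : policy R m nu)
  (x : 'rV[R]_n) (th th' : 'I_nu) (M : nat).

Definition spol : policy R m nu := fun k h =>
  if (k < M)%N then pol k.+1 (th :: h)
  else kappa_f (state_at f pol x th h M.+1) (last th h).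

Variable t' : seq 'I_nu.
Hypothesis St' : size t' = M.+1.
Let t := th' :: take M t'.

Lemma mode_shift k : (k <= M)%N -> mode_at th' t' k = mode_at th t k.+1.
Proof.
rewrite /mode_at /t /=; case: k => [//|k] hk /=.
rewrite nth_take // (set_nth_default th') // St'; lia.
Qed.

Lemma input_shift k : (k < M)%N -> input_at spol th' t' k = input_at pol th t k.+1.
Proof.
move=> hk; rewrite /input_at /spol hk /t /= take_takel //; exact: ltnW.
Qed.

Lemma state_shift k : (k <= M)%N ->
  state_at f spol (state_at f pol x th t 1) th' t' k = state_at f pol x th t k.+1.
Proof.
elim: k => [//|k IH] hk /=.
rewrite IH; last lia.
rewrite input_shift; last lia.
rewrite mode_shift //; lia.
Qed.

Lemma input_last : input_at spol th' t' M =
  kappa_f (state_at f pol x th t M.+1) (last th t).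
Proof. by rewrite /input_at /spol ltnn. Qed.

Lemma mode_last : mode_at th' t' M = last th t.
Proof.
rewrite mode_shift // /mode_at (last_nth th) /t /= size_takel ?St' //.
Qed.

End Shift.

Theorem proposition2 (R : realType) (n m nu N : nat)
  (P : 'M[R]_nu)
  (f : 'rV[R]_n -> 'rV[R]_m -> 'I_nu -> 'rV[R]_n)
  (Y : 'I_nu -> set ('rV[R]_n * 'rV[R]_m))
  (l : 'rV[R]_n -> 'rV[R]_m -> 'I_nu -> R)
  (Vf : 'rV[R]_n -> 'I_nu -> R)
  (Xf : 'I_nu -> set 'rV[R]_n)
  (kappa_f : 'rV[R]_n -> 'I_nu -> 'rV[R]_m)
  (kappa_N : 'rV[R]_n -> 'I_nu -> 'rV[R]_m) :
  (0 < nu)%N -> (0 < N)%N ->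
  standing_assumptions P f Y l ->
  UPI P f Y kappa_f Xf ->
  (forall x th, feasibility_domain P f Y Xf N (x, th) ->
     exists pol, optimal_policy P f Y Xf l Vf N x th pol /\
                 pol 0%N [:: th] = kappa_N x th) ->
  forall (x : 'rV[R]_n) (th : 'I_nu),
    feasibility_domain P f Y Xf N (x, th) ->
    forall th' : 'I_nu, 0 < P th th' ->
      feasibility_domain P f Y Xf N (f x (kappa_N x th) th, th').
Proof.
case: N => [//|M] _ _ _ [_ Hupi] Hopt x th Hfeas th' Hp.
have [pol [[Hpf _] H0]] := Hopt x th Hfeas.
exists (@spol R n m nu f kappa_f pol x th M) => /=.
move=> t' Ht'.
have St' : size t' = M.+1 by rewrite size_tuple.
have Sz : size (th' :: take M t') == M.+1 by rewrite /= size_takel ?St'.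
have Had : admissible P th (th' :: take M t') by rewrite /admissible /= Hp /= take_path.
have [/= HY /= HX] := Hpf (Tuple Sz) Had.
have Hx1 : f x (kappa_N x th) th = state_at f pol x th (th' :: take M t') 1.
  by rewrite /= /input_at /= H0.
rewrite Hx1.
have HU := Hupi _ _ HX.
split.
- move=> k hk.
  case: (ltngtP k M) => hkM; last first.
  + subst k. rewrite state_shift // input_last // (@mode_last _ th th' _ _ St'). by case: HU.
  + lia.
  + have hk' : (k <= M)%N by exact: ltnW.
    rewrite state_shift // input_shift // (@mode_shift _ th th' M _ St') //.
    by apply: (HY k.+1).
- rewrite /=.
  rewrite state_shift // input_last // (@mode_last _ th th' _ _ St').
  case: HU => _ HU; apply: HU.
  have := @mode_last _ th th' _ _ St'; rewrite /= => <-.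
  move/(pathP th'): Ht' => /(_ M).
  rewrite St' ltnSn => /(_ isT).
  by rewrite (last_nth th') St'.
Qed.
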